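(* Let $T=(F_0,F_1,F_2)$ be a template of order $10$ and type $(4,4,2,2,2)$ (so rows $0$–$3$ and columns $0$–$3$ are relational, and each $F_i$ has exactly two ones in each row and column). Then: (i) every cell in $Q_2$ or $Q_3$ has type ${*}{*}000$; (ii) every cell in $Q_1$ has type $11001$, $11010$, $11100$ or $11111$, and each of these four types occurs exactly once in each row and exactly once in each column of $Q_1$; (iii) every cell in $Q_4$ has type $00001$, $00010$ or $00100$, and each of these three types occurs exactly twice in each row and exactly twice in each column of $Q_4$. Here ${*}$ denotes an arbitrary bit.
   Context: For $n$ even and even $\lambda_0,\dots,\lambda_{k-1}$, a template of order $n$ and type $(\lambda_0,\dots,\lambda_{k-1})$ is a list $(F_0,\dots,F_{k-3})$ of $n\times n$ arrays over $\{0,1\}$ such that $F_{t-2}$ has exactly $\lambda_t$ ones in each row and each column, the arrays are pairwise orthogonal (for arrays $F,F'$ with $\lambda,\mu$ ones per row/column, each pair $(a,b)\in\{0,1\}^2$ occurs in exactly $f_af'_b$ cells, where $f_1=\lambda,f_0=n-\lambda,f'_1=\mu,f'_0=n-\mu$), rows $0,\dots,\lambda_0-1$ and columns $0,\dots,\lambda_1-1$ are called relational, and every cell has weight congruent to $\chi=\frac12\sum_i\lambda_i$ modulo $2$. The type of cell $(i,j)$ is the binary string $xyF_0[i,j]\cdots F_{k-3}[i,j]$ where $x=1$ iff row $i$ is relational and $y=1$ iff column $j$ is relational; its weight is its number of ones. (For type $(4,4,2,2,2)$, $\chi=7$, so all cells have odd weight.) Quadrants for order $10$ with $\lambda_0=\lambda_1=4$: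 $Q_1$ = rows $0$–$3$ × columns $0$–$3$; $Q_2$ = rows $0$–$3$ × columns $4$–$9$; $Q_3$ = rows $4$–$9$ × columns $0$–$3$; $Q_4$ = rows $4$–$9$ × columns $4$–$9$. *)

(* Defs.v *)
From mathcomp Require Import all_boot all_algebra.
Set Implicit Arguments. Unset Strict Implicit. Unset Printing Implicit Defensive.

Definition bArray (n : nat) := 'M[bool]_n.

Definition regular n (F : bArray n) (lam : nat) : Prop :=
  (forall i : 'I_n, #|[set j : 'I_n | F i j]| = lam) /\
  (forall j : 'I_n, #|[set i : 'I_n | F i j]| = lam).

Definition fcount (n lam : nat) (a : bool) : nat := if a then lam else n - lam.

Definition orthogonal n (F G : bArray n) (lam mu : nat) : Prop :=
  forall a b : bool,
    #|[set p : 'I_n * 'I_n | (F p.1 p.2 == a) && (G p.1 p.2 == b)]| =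
    fcount n lam a * fcount n mu b.

Definition zero_array n : bArray n := const_mx false.

Definition rel_row n (lam : seq nat) (i : 'I_n) : bool := i < nth 0 lam 0.
Definition rel_col n (lam : seq nat) (j : 'I_n) : bool := j < nth 0 lam 1.

Definition cell_type n (lam : seq nat) (Fs : seq (bArray n)) (i j : 'I_n) : seq bool :=
  [:: rel_row lam i, rel_col lam j & [seq (F : 'M[bool]_n) i j | F <- Fs]].

Definition weight (s : seq bool) : nat := count id s.

Definition template n (lam : seq nat) (Fs : seq (bArray n)) : Prop :=
  [/\ ~~ odd n /\ all (fun l => ~~ odd l) lam,
      size lam = (size Fs).+2,
      (forall t, t < size Fs -> regular (nth (zero_array n) Fs t) (nth 0 lam t.+2)),
      (forall s t, s < t -> t < size Fs ->
          orthogonal (nth (zero_array n) Fs s) (nth (zero_array n) Fs t)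
                     (nth 0 lam s.+2) (nth 0 lam t.+2)) &
      (forall i j : 'I_n, weight (cell_type lam Fs i j) = (sumn lam)./2 %[mod 2])].

(* Main.v *)
Require Import Defs.
From mathcomp Require Import all_boot all_algebra.

From mathcomp Require Import zify.

Lemma c4 : \sum_(j < 10) ((j < 4) : nat) = 4.
Proof. by rewrite !big_ord_recr big_ord0 /=. Qed.
Lemma c6 : \sum_(j < 10) (~~ (j < 4) : nat) = 6.
Proof. by rewrite !big_ord_recr big_ord0 /=. Qed.

Lemma sum0_term {T : finType} {F : T -> nat} x : \sum_y F y = 0 -> F x = 0.
Proof. by rewrite (bigD1 x) //= => /eqP; rewrite addn_eq0 => /andP[/eqP -> _]. Qed.

Lemma sumeq {T : finType} {F G : T -> nat} : (forall j, F j = G j) -> \sum_j F j = \sum_j G j.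
Proof. by move=> H; apply: eq_bigr => j _. Qed.

Lemma sum_mulk {T : finType} (k : nat) (F : T -> nat) : \sum_j (k * F j) = k * \sum_j F j.
Proof.
apply: (big_ind2 (fun x y => x = k * y)) => //; first by rewrite muln0.
by move=> ? ? ? ? -> ->; rewrite mulnDr.
Qed.

Lemma line (a b c : 'I_10 -> bool) (x : bool)
  (Ha : \sum_(j < 10) (a j : nat) = 2) (Hb : \sum_(j < 10) (b j : nat) = 2) (Hc : \sum_(j < 10) (c j : nat) = 2)
  (Hodd : forall j : 'I_10, odd (x + (j < 4) + a j + b j + c j))
  (Hoff : forall j : 'I_10, x != (j < 4) -> [&& ~~ a j, ~~ b j & ~~ c j]) :
  (x -> [/\ \sum_(j < 10) ((j < 4) && [&& ~~ a j, ~~ b j & c j] : nat) = 1,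
            \sum_(j < 10) ((j < 4) && [&& ~~ a j, b j & ~~ c j] : nat) = 1,
            \sum_(j < 10) ((j < 4) && [&& a j, ~~ b j & ~~ c j] : nat) = 1 &
            \sum_(j < 10) ((j < 4) && [&& a j, b j & c j] : nat) = 1]) /\
  (~~ x -> [/\ (forall j : 'I_10, ~~ (j < 4) -> ~~ [&& a j, b j & c j]),
            \sum_(j < 10) (~~ (j < 4) && [&& ~~ a j, ~~ b j & c j] : nat) = 2,
            \sum_(j < 10) (~~ (j < 4) && [&& ~~ a j, b j & ~~ c j] : nat) = 2 &
            \sum_(j < 10) (~~ (j < 4) && [&& a j, ~~ b j & ~~ c j] : nat) = 2]).
Proof.
split; case: x Hodd Hoff => // Hodd Hoff _.
- have P1 : forall j : 'I_10, (a j + b j + c j = (j < 4) + ((j < 4) && [&& a j, b j & c j]) + ((j < 4) && [&& a j, b j & c j]))%N.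
    move=> j; move: (Hodd j) (Hoff j).
    by case: (j < 4); case: (a j); case: (b j); case: (c j) => //= _ /(_ isT).
  have S := sumeq P1.
  rewrite !big_split /= in S. rewrite Ha Hb Hc c4 in S.
  have M : \sum_(j < 10) ((j < 4) && [&& a j, b j & c j] : nat) = 1. move: S. set X := (\sum_(i < 10) _). move=> S. lia.
  have Q : forall (f g : 'I_10 -> bool), (forall j : 'I_10, f j + ((j < 4) && [&& a j, b j & c j]) = g j)%N ->
     \sum_(j < 10) (g j : nat) = 2 -> \sum_(j < 10) (f j : nat) = 1.
    move=> f g Hfg Hg; have S2 := sumeq Hfg.
    rewrite big_split /= M Hg in S2; by move: S2; rewrite addn1 => -[].
  split => //.
  + apply: (Q _ c) Hc => j; move: (Hodd j) (Hoff j).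
    by case: (j < 4); case: (a j); case: (b j); case: (c j) => //= _ /(_ isT).
  + apply: (Q _ b) Hb => j; move: (Hodd j) (Hoff j).
    by case: (j < 4); case: (a j); case: (b j); case: (c j) => //= _ /(_ isT).
  + apply: (Q _ a) Ha => j; move: (Hodd j) (Hoff j).
    by case: (j < 4); case: (a j); case: (b j); case: (c j) => //= _ /(_ isT).
- have P1 : forall j : 'I_10, (a j + b j + c j = ~~ (j < 4) + (~~ (j < 4) && [&& a j, b j & c j]) + (~~ (j < 4) && [&& a j, b j & c j]))%N.
    move=> j; move: (Hodd j) (Hoff j).
    by case: (j < 4); case: (a j); case: (b j); case: (c j) => //= _ /(_ isT).
  have S := sumeq P1.
  rewrite !big_split /= in S. rewrite Ha Hb Hc c6 in S.
  have M : \sum_(j < 10) (~~ (j < 4) && [&& a j, b j & c j] : nat) = 0. move: S. set X := (\sum_(i < 10) _). move=> S. lia.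
  have N3 : forall j : 'I_10, ~~ (j < 4) -> ~~ [&& a j, b j & c j].
    move=> j Hj; have := sum0_term j M; rewrite Hj /=; by case: [&& _, _ & _].
  have Q : forall (f g : 'I_10 -> bool), (forall j : 'I_10, f j = g j :> nat) ->
     \sum_(j < 10) (g j : nat) = 2 -> \sum_(j < 10) (f j : nat) = 2.
    move=> f g Hfg Hg; transitivity (\sum_(j < 10) (g j : nat)) => //; apply: eq_bigr => j _; exact: Hfg.
  split => //.
  + apply: (Q _ c) Hc => j; move: (Hodd j) (Hoff j) (N3 j).
    by case: (j < 4); case: (a j); case: (b j); case: (c j) => //= H1 H2 H3; try (by move: (H2 isT)); try (by move: (H3 isT)).
  + apply: (Q _ b) Hb => j; move: (Hodd j) (Hoff j) (N3 j).
    by case: (j < 4); case: (a j); case: (b j); case: (c j) => //= H1 H2 H3; try (by move: (H2 isT)); try (by move: (H3 isT)).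
  + apply: (Q _ a) Ha => j; move: (Hodd j) (Hoff j) (N3 j).
    by case: (j < 4); case: (a j); case: (b j); case: (c j) => //= H1 H2 H3; try (by move: (H2 isT)); try (by move: (H3 isT)).
Qed.

Lemma card_sum {T : finType} (P : pred T) : #|[set x | P x]| = \sum_x (P x : nat).
Proof. rewrite -sum1_card big_mkcond /=; apply: eq_bigr => x _; rewrite inE; by case: (P x). Qed.

Lemma c48 : \sum_(p : 'I_10 * 'I_10) ((p.1 < 4) != (p.2 < 4) : nat) = 48.
Proof.
rewrite -(pair_big xpredT xpredT (fun i j : 'I_10 => ((i < 4) != (j < 4) : nat))) /=.
by rewrite !big_ord_recr !big_ord0 /=.
Qed.
Lemma c300 : \sum_(p : 'I_10 * 'I_10) 3 = 300.
Proof. by rewrite sum_nat_const card_prod card_ord. Qed.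

Lemma rows20 (F : bArray 10) : (forall i : 'I_10, \sum_(j < 10) (F i j : nat) = 2) ->
  \sum_(p : 'I_10 * 'I_10) (F p.1 p.2 : nat) = 20.
Proof.
move=> H; rewrite -(pair_big xpredT xpredT (fun i j : 'I_10 => (F i j : nat))) /=.
transitivity (\sum_(i < 10) 2); first by apply: eq_bigr => i _; exact: H.
by rewrite sum_nat_const card_ord.
Qed.

Lemma ptG {x y a b c : bool} : odd (x + y + a + b + c) ->
  (a + a + a + b + b + b + c + c + c + (x != y) + (x != y) + (x != y) =
   ((a == true) && (b == true)) + ((a == true) && (b == true)) +
   ((a == true) && (c == true)) + ((a == true) && (c == true)) +
   ((b == true) && (c == true)) + ((b == true) && (c == true)) + 3 +
   ((x != y) && a) + ((x != y) && a) + ((x != y) && b) + ((x != y) && b) +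
   ((x != y) && c) + ((x != y) && c))%N.
Proof. by case: x; case: y; case: a; case: b; case: c. Qed.

Theorem mainTheorem9 (F0 F1 F2 : bArray 10) :
  let lam := [:: 4; 4; 2; 2; 2] in
  let Fs := [:: F0; F1; F2] in
  let ty := cell_type lam Fs in
  template lam Fs ->
  (* (i) Q2 and Q3 *)
  (forall i j : 'I_10, ((i < 4) && (4 <= j)) || ((4 <= i) && (j < 4)) ->
     drop 2 (ty i j) = [:: false; false; false]) /\
  (* (ii) Q1 *)
  ((forall i j : 'I_10, i < 4 -> j < 4 ->
     ty i j \in [:: [:: true; true; false; false; true];
                    [:: true; true; false; true; false];
                    [:: true; true; true; false; false];
                    [:: true; true; true; true; true]]) /\
   (forall t, t \in [:: [:: true; true; false; false; true];
                        [:: true; true; false; true; false];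
                        [:: true; true; true; false; false];
                        [:: true; true; true; true; true]] ->
     (forall i : 'I_10, i < 4 -> #|[set j : 'I_10 | (j < 4) && (ty i j == t)]| = 1) /\
     (forall j : 'I_10, j < 4 -> #|[set i : 'I_10 | (i < 4) && (ty i j == t)]| = 1))) /\
  (* (iii) Q4 *)
  ((forall i j : 'I_10, 4 <= i -> 4 <= j ->
     ty i j \in [:: [:: false; false; false; false; true];
                    [:: false; false; false; true; false];
                    [:: false; false; true; false; false]]) /\
   (forall t, t \in [:: [:: false; false; false; false; true];
                        [:: false; false; false; true; false];
                        [:: false; false; true; false; false]] ->
     (forall i : 'I_10, 4 <= i -> #|[set j : 'I_10 | (4 <= j) && (ty i j == t)]| = 2) /\
     (forall j : 'I_10, 4 <= j -> #|[set i : 'I_10 | (4 <= i) && (ty i j == t)]| = 2))).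
Proof.
move=> lam Fs ty [_ _ Hreg Horth Hwt].
have [R0r R0c] : regular F0 2 := Hreg 0 erefl.
have [R1r R1c] : regular F1 2 := Hreg 1 erefl.
have [R2r R2c] : regular F2 2 := Hreg 2 erefl.
have O01 := Horth 0 1 erefl erefl true true.
have O02 := Horth 0 2 erefl erefl true true.
have O12 := Horth 1 2 erefl erefl true true.
rewrite /= card_sum in O01; rewrite /= card_sum in O02; rewrite /= card_sum in O12.
have Sr : forall F : bArray 10, (forall i : 'I_10, #|[set j | F i j]| = 2) ->
   forall i : 'I_10, \sum_(j < 10) (F i j : nat) = 2.
  by move=> F H i; have := H i; rewrite card_sum => E; exact: E.
have Sc : forall F : bArray 10, (forall j : 'I_10, #|[set i | F i j]| = 2) ->
   forall j : 'I_10, \sum_(i < 10) (F i j : nat) = 2.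
  by move=> F H j; have := H j; rewrite card_sum => E; exact: E.
have Hodd : forall i j : 'I_10, odd ((i < 4) + (j < 4) + F0 i j + F1 i j + F2 i j).
  move=> i j; move: (Hwt i j); rewrite /weight /cell_type /rel_row /rel_col /= !modn2 addn0 !addnA.
  by case: (odd _) => //=; case: (odd _).
have G : forall p : 'I_10 * 'I_10, _ := fun p => ptG (Hodd p.1 p.2).
have S := sumeq G.
rewrite !big_split /= in S.
rewrite (rows20 _ (Sr _ R0r)) (rows20 _ (Sr _ R1r)) (rows20 _ (Sr _ R2r)) c48 c300 O01 O02 O12 in S.
have Z0 : \sum_(p : 'I_10 * 'I_10) (((p.1 < 4) != (p.2 < 4)) && F0 p.1 p.2 : nat) = 0.
  move: S; set X := \sum_(p : 'I_10 * 'I_10) (((p.1 < 4) != (p.2 < 4)) && F0 p.1 p.2 : nat); lia.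
have Z1 : \sum_(p : 'I_10 * 'I_10) (((p.1 < 4) != (p.2 < 4)) && F1 p.1 p.2 : nat) = 0.
  move: S; set X := \sum_(p : 'I_10 * 'I_10) (((p.1 < 4) != (p.2 < 4)) && F1 p.1 p.2 : nat); lia.
have Z2 : \sum_(p : 'I_10 * 'I_10) (((p.1 < 4) != (p.2 < 4)) && F2 p.1 p.2 : nat) = 0.
  move: S; set X := \sum_(p : 'I_10 * 'I_10) (((p.1 < 4) != (p.2 < 4)) && F2 p.1 p.2 : nat); lia.
have Zoff : forall i j : 'I_10, (i < 4) != (j < 4) -> [&& ~~ F0 i j, ~~ F1 i j & ~~ F2 i j].
  move=> i j H; move: (sum0_term (i, j) Z0) (sum0_term (i, j) Z1) (sum0_term (i, j) Z2).
  by rewrite /= H; case: (F0 i j); case: (F1 i j); case: (F2 i j).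
have HoddC : forall i j : 'I_10, odd ((j < 4) + (i < 4) + F0 i j + F1 i j + F2 i j).
  by move=> i j; rewrite [(j < 4) + _]addnC; exact: Hodd.
have Lr := fun i : 'I_10 => line (fun j => F0 i j) (fun j => F1 i j) (fun j => F2 i j) (i < 4)
   (Sr _ R0r i) (Sr _ R1r i) (Sr _ R2r i) (Hodd i) (fun j => Zoff i j).
have Lc := fun j : 'I_10 => line (fun i => F0 i j) (fun i => F1 i j) (fun i => F2 i j) (j < 4)
   (Sc _ R0c j) (Sc _ R1c j) (Sc _ R2c j) (fun i => HoddC i j)
   (fun i H => Zoff i j (ltac:(by rewrite eq_sym))).
rewrite /ty /cell_type /rel_row /rel_col /lam /Fs /=.
split; [|split; split].
- move=> i j H; have Z : (i < 4) != (j < 4) by move: H; case: (ltnP i 4); case: (ltnP j 4).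
  move: (Zoff i j Z); by case: (F0 i j); case: (F1 i j); case: (F2 i j).
- move=> i j Hi Hj; have := Hodd i j; rewrite Hi Hj.
  by case: (F0 i j); case: (F1 i j); case: (F2 i j).
- move=> t; rewrite !inE => /or4P [] /eqP ->; split => [i Hi | j Hj].
  + have [[C1 C2 C3 C4] _] := (proj1 (Lr i) Hi, 0).
    rewrite card_sum; (etransitivity; last exact: C1); apply: eq_bigr => k _ /=.
    by rewrite Hi; case: (ltnP k 4); case: (F0 i k); case: (F1 i k); case: (F2 i k).
  + have [[C1 C2 C3 C4] _] := (proj1 (Lc j) Hj, 0).
    rewrite card_sum; (etransitivity; last exact: C1); apply: eq_bigr => k _ /=.
    by rewrite Hj; case: (ltnP k 4); case: (F0 k j); case: (F1 k j); case: (F2 k j).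
  + have [[C1 C2 C3 C4] _] := (proj1 (Lr i) Hi, 0).
    rewrite card_sum; (etransitivity; last exact: C2); apply: eq_bigr => k _ /=.
    by rewrite Hi; case: (ltnP k 4); case: (F0 i k); case: (F1 i k); case: (F2 i k).
  + have [[C1 C2 C3 C4] _] := (proj1 (Lc j) Hj, 0).
    rewrite card_sum; (etransitivity; last exact: C2); apply: eq_bigr => k _ /=.
    by rewrite Hj; case: (ltnP k 4); case: (F0 k j); case: (F1 k j); case: (F2 k j).
  + have [[C1 C2 C3 C4] _] := (proj1 (Lr i) Hi, 0).
    rewrite card_sum; (etransitivity; last exact: C3); apply: eq_bigr => k _ /=.
    by rewrite Hi; case: (ltnP k 4); case: (F0 i k); case: (F1 i k); case: (F2 i k).
  + have [[C1 C2 C3 C4] _] := (proj1 (Lc j) Hj, 0).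
    rewrite card_sum; (etransitivity; last exact: C3); apply: eq_bigr => k _ /=.
    by rewrite Hj; case: (ltnP k 4); case: (F0 k j); case: (F1 k j); case: (F2 k j).
  + have [[C1 C2 C3 C4] _] := (proj1 (Lr i) Hi, 0).
    rewrite card_sum; (etransitivity; last exact: C4); apply: eq_bigr => k _ /=.
    by rewrite Hi; case: (ltnP k 4); case: (F0 i k); case: (F1 i k); case: (F2 i k).
  + have [[C1 C2 C3 C4] _] := (proj1 (Lc j) Hj, 0).
    rewrite card_sum; (etransitivity; last exact: C4); apply: eq_bigr => k _ /=.
    by rewrite Hj; case: (ltnP k 4); case: (F0 k j); case: (F1 k j); case: (F2 k j).
- move=> i j Hi Hj; have [N3 _ _ _] := proj2 (Lr i) (ltac:(by rewrite -leqNgt)).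
  move: (N3 j (ltac:(by rewrite -leqNgt))) (Hodd i j).
  rewrite leqNgt in Hi; rewrite leqNgt in Hj; rewrite (negbTE Hi) (negbTE Hj).
  by case: (F0 i j); case: (F1 i j); case: (F2 i j).
- move=> t; rewrite !inE => /or3P [] /eqP ->; split => [i Hi | j Hj].
  + have [_ C1 C2 C3] := proj2 (Lr i) (ltac:(by rewrite -leqNgt)).
    rewrite card_sum; (etransitivity; last exact: C1); apply: eq_bigr => k _ /=.
    rewrite leqNgt in Hi; rewrite (negbTE Hi).
    by case: (ltnP k 4); case: (F0 i k); case: (F1 i k); case: (F2 i k).
  + have [_ C1 C2 C3] := proj2 (Lc j) (ltac:(by rewrite -leqNgt)).
    rewrite card_sum; (etransitivity; last exact: C1); apply: eq_bigr => k _ /=.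
    rewrite leqNgt in Hj; rewrite (negbTE Hj).
    by case: (ltnP k 4); case: (F0 k j); case: (F1 k j); case: (F2 k j).
  + have [_ C1 C2 C3] := proj2 (Lr i) (ltac:(by rewrite -leqNgt)).
    rewrite card_sum; (etransitivity; last exact: C2); apply: eq_bigr => k _ /=.
    rewrite leqNgt in Hi; rewrite (negbTE Hi).
    by case: (ltnP k 4); case: (F0 i k); case: (F1 i k); case: (F2 i k).
  + have [_ C1 C2 C3] := proj2 (Lc j) (ltac:(by rewrite -leqNgt)).
    rewrite card_sum; (etransitivity; last exact: C2); apply: eq_bigr => k _ /=.
    rewrite leqNgt in Hj; rewrite (negbTE Hj).
    by case: (ltnP k 4); case: (F0 k j); case: (F1 k j); case: (F2 k j).
  + have [_ C1 C2 C3] := proj2 (Lr i) (ltac:(by rewrite -leqNgt)).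
    rewrite card_sum; (etransitivity; last exact: C3); apply: eq_bigr => k _ /=.
    rewrite leqNgt in Hi; rewrite (negbTE Hi).
    by case: (ltnP k 4); case: (F0 i k); case: (F1 i k); case: (F2 i k).
  + have [_ C1 C2 C3] := proj2 (Lc j) (ltac:(by rewrite -leqNgt)).
    rewrite card_sum; (etransitivity; last exact: C3); apply: eq_bigr => k _ /=.
    rewrite leqNgt in Hj; rewrite (negbTE Hj).
    by case: (ltnP k 4); case: (F0 k j); case: (F1 k j); case: (F2 k j).
Qed.
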